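(* Let $n\geq 1$ be an integer and let $a,b,x\in\mathbb{C}$ with $b\neq 0$. Then $$\sum_{k=0}^{n-1}\binom{n-1}{k}C_{k+1}^{(a,b)}x^{k}(x-a)^{n-1-k}(x-b)^{n-1-k}=\sum_{k=0}^{n-1}\frac{1}{n}\binom{n}{k}\binom{n}{k+1}x^{2k}a^{n-k}b^{n-1-k}=\frac{1}{b}\sum_{k=0}^{n}\binom{n+k}{2k}C_k x^{2k}(ab-x^2)^{n-k},$$ where $C_k$ is the $k$-th Catalan number and $C_m^{(a,b)}$ is the valley type $(a,b)$-Catalan number defined in the context.
   Context: $C_k=\frac{1}{k+1}\binom{2k}{k}$ are the Catalan numbers. For $m\geq 1$ and $a,b\in\mathbb{C}$, the valley type $(a,b)$-Catalan number is $C_m^{(a,b)}=\sum_{k=0}^{m-1}\frac{1}{m}\binom{m}{k}\binom{m}{k+1}a^{m-k}b^k$. *)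

(* Defs.v *)
From HB Require Import structures.
From mathcomp Require Import all_boot all_order all_algebra.
From mathcomp Require Import reals.
From mathcomp.real_closed Require Import complex.
Set Implicit Arguments. Unset Strict Implicit. Unset Printing Implicit Defensive.
Import Order.TTheory GRing.Theory Num.Theory.
Local Open Scope ring_scope.

Definition catalan (k : nat) : nat := 'C(k.*2, k) %/ k.+1.

Definition valleyCat (F : fieldType) (m : nat) (a b : F) : F :=
  \sum_(0 <= k < m) (m%:R)^-1 * ('C(m, k))%:R * ('C(m, k.+1))%:R
                    * a ^+ (m - k) * b ^+ k.

(* Main.v *)
Require Import Defs.
From HB Require Import structures.
From mathcomp Require Import all_boot all_order all_algebra.
From mathcomp Require Import reals.
From mathcomp.real_closed Require Import complex.
From mathcomp Require Import ring zify.
Set Implicit Arguments. Unset Strict Implicit. Unset Printing Implicit Defensive.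
Import Order.TTheory GRing.Theory Num.Theory.
Local Open Scope ring_scope.

Section S.
Variable F : numFieldType.

Lemma fact_neq0 n : (n`!)%:R != 0 :> F.
Proof. by rewrite pnatr_eq0 -lt0n fact_gt0. Qed.

Lemma natS_neq0 n : (n.+1)%:R != 0 :> F.
Proof. by rewrite pnatr_eq0. Qed.

Lemma binF n k : (k <= n)%N ->
  ('C(n, k))%:R = (n`!)%:R / ((k`!)%:R * ((n - k)`!)%:R) :> F.
Proof.
move=> le; rewrite -(bin_fact le) !natrM mulfK //.
by rewrite mulf_eq0 negb_or !fact_neq0.
Qed.

Lemma binmul N K J : (K <= J)%N -> (J <= N)%N ->
  ('C(N, K) * 'C(N - K, J - K) = 'C(N, J) * 'C(J, K))%N.
Proof.
move=> h1 h2; apply/eqP; rewrite -(eqr_nat F) !natrM.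
rewrite !binF //; try lia.
have -> : (N - K - (J - K) = N - J)%N by lia.
apply/eqP; field.
by rewrite !fact_neq0.
Qed.

Lemma vand2 j l : (\sum_(0 <= i < j.+1) 'C(j, i) * 'C(l, i.+1) = 'C(l + j, j.+1))%N.
Proof.
rewrite -binomial.Vandermonde big_ord_recl /= subn0 (bin_small (ltnSn j)) muln0 add0n big_mkord.
apply: eq_bigr => i _; rewrite /bump /= add1n subSS mulnC bin_sub //.
by rewrite -ltnS.
Qed.


Lemma sum_widen n1 n2 (f : nat -> F) : (n1 <= n2)%N ->
  (forall i, (n1 <= i)%N -> (i < n2)%N -> f i = 0) ->
  \sum_(0 <= i < n1) f i = \sum_(0 <= i < n2) f i.
Proof.
move=> le h; rewrite (@big_cat_nat _ _ _ n1 0 n2 _ _ (leq0n _) le) /=.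
rewrite [X in _ + X]big1_seq ?addr0 // => i /andP[_].
by rewrite mem_index_iota => /andP[h1 h2]; apply: h.
Qed.

Lemma sum_shift N i (g : nat -> F) : (i <= N)%N ->
  \sum_(0 <= j < N) (if (i <= j)%N then g j else 0) =
  \sum_(0 <= l < N - i) g (l + i)%N.
Proof.
move=> le; rewrite (@big_cat_nat _ _ _ i 0 N _ _ (leq0n _) le) /=.
rewrite big1_seq ?add0r; last first.
  by move=> j /andP[_]; rewrite mem_index_iota => /andP[_ h]; rewrite leqNgt h.
rewrite -{1}(add0n i) big_addn; apply: eq_big_nat => j /andP[_ _].
by rewrite leq_addl.
Qed.

Lemma reindex N (f : nat -> nat -> F) :
  (forall i l, (N <= i + l)%N -> f i l = 0) ->
  \sum_(0 <= i < N) \sum_(0 <= l < N) f i l =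
  \sum_(0 <= j < N) \sum_(0 <= i < j.+1) f i (j - i)%N.
Proof.
move=> h.
transitivity (\sum_(0 <= j < N) \sum_(0 <= i < N) (if (i <= j)%N then f i (j - i)%N else 0)); last first.
  apply: eq_big_nat => j /andP[_ hj].
  rewrite -(sum_widen (n1 := j.+1) (n2 := N)) //; last by move=> i hi _; rewrite leqNgt hi.
  by apply: eq_big_nat => i /andP[_ hij]; rewrite -ltnS hij.
rewrite [RHS]exchange_big_nat; apply: eq_big_nat => i /andP[_ hi].
rewrite sum_shift ?(ltnW hi) //.
rewrite -(sum_widen (n1 := (N - i)%N)) ?leq_subr //; last first.
  by move=> l hl _; apply: h; lia.
by apply: eq_big_nat => l _; rewrite addnK.
Qed.


Definition ct (k : nat) : F := ('C(k.*2, k))%:R / (k.+1)%:R.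

Lemma termA i j m : (i <= j)%N -> (j < m)%N ->
  ('C(m.-1, i.*2))%:R * ct i * ('C(m.-1 - i.*2, j - i))%:R
  = (m%:R)^-1 * ('C(m, j))%:R * ('C(j, i) * 'C(m - j, i.+1))%:R.
Proof.
case: m => [//|m] /= hij hjm.
case: (leqP (i + j) m) => hm; last first.
  rewrite (@bin_small (m.+1 - j) i.+1) ?muln0 ?mulr0; last by lia.
  case: (leqP i.*2 m) => h2.
    by rewrite (@bin_small (m - i.*2)) ?mulr0 //; lia.
  by rewrite bin_small // !mul0r.
rewrite /ct natrM !binF; try lia.
have -> : (i.*2 - i = i)%N by lia.
have -> : (m - i.*2 - (j - i) = m - j - i)%N by lia.
have -> : (m.+1 - j - i.+1 = m - j - i)%N by lia.
have -> : (m.+1 - j = (m - j).+1)%N by lia.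
rewrite !factS !natrM.
field; by rewrite ?nat1r !fact_neq0 ?natS_neq0.
Qed.


Lemma coefA m j : (j < m)%N ->
  \sum_(0 <= i < j.+1) ('C(m.-1, i.*2))%:R * ct i * ('C(m.-1 - i.*2, j - i))%:R
  = (m%:R)^-1 * ('C(m, j))%:R * ('C(m, j.+1))%:R.
Proof.
move=> hjm.
rewrite (eq_big_nat _ _ (F2 := fun i => (m%:R)^-1 * ('C(m, j))%:R * ('C(j, i) * 'C(m - j, i.+1))%:R)); last first.
  by move=> i /andP[_ hi]; rewrite termA.
by rewrite -mulr_sumr -natr_sum vand2 subnK // ltnW.
Qed.

Lemma coefB n j : (0 < n)%N -> (j <= n)%N ->
  \sum_(0 <= k < j.+1) (n%:R)^-1 * ('C(n, k))%:R * ('C(n, k.+1))%:R * ('C(n - k, j - k))%:R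
  = ('C(n + j, j.*2))%:R * ct j :> F.
Proof.
move=> hn hjn.
rewrite (eq_big_nat _ _ (F2 := fun k => (n%:R)^-1 * ('C(n, j))%:R * ('C(j, k) * 'C(n, k.+1))%:R)); last first.
  move=> k /andP[_ hk].
  have e : ('C(n, k))%:R * ('C(n - k, j - k))%:R = ('C(n, j))%:R * ('C(j, k))%:R :> F.
    by rewrite -!natrM binmul.
  rewrite !natrM; transitivity ((n%:R)^-1 * (('C(n, k))%:R * ('C(n - k, j - k))%:R) * ('C(n, k.+1))%:R : F); first by ring.
  by rewrite e; ring.
rewrite -mulr_sumr -natr_sum vand2 /ct.
case: n hn hjn => [//|n] _ hjn.
rewrite !binF; try lia.
have -> : (j.*2 - j = j)%N by lia.
have -> : (n.+1 + j - j.+1 = n)%N by lia.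
have -> : (n.+1 + j - j.*2 = n.+1 - j)%N by lia.
rewrite !factS !natrM.
field; by rewrite ?nat1r !fact_neq0 ?natS_neq0.
Qed.


Lemma touchard m (A B : F) : (0 < m)%N ->
  \sum_(0 <= j < m) (m%:R)^-1 * ('C(m, j))%:R * ('C(m, j.+1))%:R * A ^+ (m - j) * B ^+ j
  = A * \sum_(0 <= i < m) ('C(m.-1, i.*2))%:R * ct i * (A * B) ^+ i * (A + B) ^+ (m.-1 - i.*2).
Proof.
move=> hm.
pose f i l := ('C(m.-1, i.*2))%:R * ct i * ('C(m.-1 - i.*2, l))%:R * A ^+ (m - (i + l)) * B ^+ (i + l).
have fz : forall i l, (m <= i + l)%N -> f i l = 0.
  move=> i l hil; rewrite /f; case: (leqP i.*2 m.-1) => h2.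
    rewrite (@bin_small (m.-1 - i.*2)%N l); first by rewrite !mulr0 !mul0r. lia.
  by rewrite (@bin_small m.-1 i.*2) // !mul0r.
transitivity (\sum_(0 <= j < m) \sum_(0 <= i < j.+1) f i (j - i)%N).
  apply: eq_big_nat => j /andP[_ hj].
  rewrite -coefA // !mulr_suml; apply: eq_big_nat => i /andP[_ hi].
  by rewrite /f subnKC.
rewrite -reindex // mulr_sumr; apply: eq_big_nat => i /andP[_ hi].
rewrite exprDn -(big_mkord xpredT (fun l => A ^+ (m.-1 - i.*2 - l) * B ^+ l *+ 'C(m.-1 - i.*2, l))).
rewrite -(sum_widen (n1 := (m.-1 - i.*2).+1) (n2 := m)); last 2 first.
- by lia.
- by move=> l hl _; rewrite /f (@bin_small _ l hl) mulr0 !mul0r.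
rewrite !mulr_sumr; apply: eq_big_nat => l /andP[_ hl].
rewrite /f; case: (leqP i.*2 m.-1) => h2; last first.
  by rewrite (@bin_small m.-1 i.*2) // !mul0r ?mulr0.
have -> : (m - (i + l) = 1 + i + (m.-1 - i.*2 - l))%N by lia.
rewrite !exprD expr1 exprMn mulr_natr.
ring.
Qed.


Lemma P2 n (y z : F) : (0 < n)%N ->
  \sum_(0 <= k < n) (n%:R)^-1 * ('C(n, k))%:R * ('C(n, k.+1))%:R * y ^+ k * z ^+ (n - k)
  = \sum_(0 <= k < n.+1) ('C(n + k, k.*2))%:R * ct k * y ^+ k * (z - y) ^+ (n - k).
Proof.
move=> hn.
set w := z - y.
have hz : z = w + y by rewrite /w subrK.
rewrite hz.
pose f k l := (n%:R)^-1 * ('C(n, k))%:R * ('C(n, k.+1))%:R * ('C(n - k, l))%:R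
               * y ^+ (k + l) * w ^+ (n - (k + l)).
have fz : forall k l, (n.+1 <= k + l)%N -> f k l = 0.
  move=> k l hkl; rewrite /f; case: (leqP k n) => hk.
    by rewrite (@bin_small (n - k) l) ?mulr0 ?mul0r //; lia.
  by rewrite (@bin_small n k) // mulr0 !mul0r.
transitivity (\sum_(0 <= k < n.+1) \sum_(0 <= l < n.+1) f k l).
  rewrite (sum_widen (n1 := n) (n2 := n.+1)) //; last first.
    move=> k h1 h2; have -> : k = n by lia.
    by rewrite (@bin_small n n.+1) // mulr0 !mul0r.
  apply: eq_big_nat => k /andP[_ hk].
  rewrite exprDn -(big_mkord xpredT (fun l => w ^+ (n - k - l) * y ^+ l *+ 'C(n - k, l))).
  rewrite (sum_widen (n1 := (n - k).+1) (n2 := n.+1)); last 2 first.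
  - by lia.
  - by move=> l hl _; rewrite bin_small ?mulr0n.
  rewrite mulr_sumr; apply: eq_big_nat => l /andP[_ hl].
  by rewrite /f subnDA exprD mulr_natr; ring.
rewrite reindex //; apply: eq_big_nat => j /andP[_ hj].
have hjn : (j <= n)%N by lia.
rewrite -coefB //.
rewrite !mulr_suml; apply: eq_big_nat => k /andP[_ hk].
by rewrite /f subnKC.
Qed.


Definition vc (m : nat) (a b : F) : F :=
  \sum_(0 <= k < m) (m%:R)^-1 * ('C(m, k))%:R * ('C(m, k.+1))%:R
                    * a ^+ (m - k) * b ^+ k.

Lemma P1 n (a b x : F) : (0 < n)%N ->
  \sum_(0 <= k < n) ('C(n.-1, k))%:R * vc k.+1 a b * x ^+ k
       * (x - a) ^+ (n.-1 - k) * (x - b) ^+ (n.-1 - k)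
  = a * \sum_(0 <= i < n) ('C(n.-1, i.*2))%:R * ct i * (a * b * x ^+ 2) ^+ i
        * (a * b + x ^+ 2) ^+ (n.-1 - i.*2).
Proof.
move=> hn.
pose G i k := ct i * (a * b) ^+ i * ('C(n.-1, k) * 'C(k, i.*2))%:R * x ^+ k
     * (a + b) ^+ (k - i.*2) * ((x - a) * (x - b)) ^+ (n.-1 - k).
transitivity (\sum_(0 <= k < n) a * \sum_(0 <= i < n) G i k).
  apply: eq_big_nat => k /andP[_ hk].
  rewrite /vc touchard //=.
  rewrite (sum_widen (n1 := k.+1) (n2 := n)) //; last first.
    by move=> i h1 h2; rewrite (@bin_small k i.*2) ?mul0r //; lia.
  rewrite !mulr_sumr !mulr_suml; apply: eq_big_nat => i _.
  by rewrite /G natrM !exprMn; ring.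
rewrite -mulr_sumr exchange_big_nat; congr (a * _).
apply: eq_big_nat => i /andP[_ hi].
case: (leqP i.*2 n.-1) => h2; last first.
  rewrite (@bin_small n.-1 i.*2) // !mul0r.
  apply: big1_seq => k /andP[_]; rewrite mem_index_iota => /andP[_ hk].
  by rewrite /G (@bin_small k i.*2) ?muln0 ?mulr0 ?mul0r //; lia.
transitivity (\sum_(0 <= k < n) (if (i.*2 <= k)%N then G i k else 0)).
  apply: eq_big_nat => k _; case: ifP => // hk.
  by rewrite /G (@bin_small k i.*2) ?muln0 ?mulr0 ?mul0r //; lia.
rewrite sum_shift; last by lia.
have -> : (n - i.*2 = (n.-1 - i.*2).+1)%N by lia.
have hp : a * b + x ^+ 2 = (x - a) * (x - b) + x * (a + b) by ring.
rewrite hp exprDn -(big_mkord xpredT (fun l => ((x - a) * (x - b)) ^+ (n.-1 - i.*2 - l) * (x * (a + b)) ^+ l *+ 'C(n.-1 - i.*2, l))).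
rewrite mulr_sumr; apply: eq_big_nat => l /andP[_ hl].
rewrite /G -binmul; try lia.
rewrite addnK.
have -> : (n.-1 - (l + i.*2) = n.-1 - i.*2 - l)%N by lia.
have ex : x ^+ i.*2 = (x ^+ 2) ^+ i by rewrite -exprM mul2n.
rewrite !exprD ex !exprMn natrM mulr_natr.
ring.
Qed.


Lemma catF k : ((catalan k)%:R : F) = ct k.
Proof.
have e := mul_bin_left k.*2 k.
have hk : (k.*2 - k = k)%N by lia.
rewrite hk in e.
have hd : (k.+1 %| 'C(k.*2, k))%N.
  have -> : 'C(k.*2, k) = (k.+1 * 'C(k.*2, k) - k.+1 * 'C(k.*2, k.+1))%N.
    by rewrite e mulSn addnK.
  by rewrite dvdn_sub // dvdn_mulr.
by rewrite /ct /catalan -{2}(divnK hd) natrM mulfK // natS_neq0.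
Qed.

End S.

Import Order.TTheory GRing.Theory Num.Theory.
Local Open Scope ring_scope.
Local Open Scope complex_scope.

Theorem proposition3p1 (R : realType) (n : nat) (a b x : R[i]) :
  (1 <= n)%N -> b != 0 ->
  (\sum_(0 <= k < n) ('C(n.-1, k))%:R * valleyCat k.+1 a b * x ^+ k
       * (x - a) ^+ (n.-1 - k) * (x - b) ^+ (n.-1 - k)
   = \sum_(0 <= k < n) (n%:R)^-1 * ('C(n, k))%:R * ('C(n, k.+1))%:R
       * x ^+ (k.*2) * a ^+ (n - k) * b ^+ (n.-1 - k))
  /\
  (\sum_(0 <= k < n) (n%:R)^-1 * ('C(n, k))%:R * ('C(n, k.+1))%:R
       * x ^+ (k.*2) * a ^+ (n - k) * b ^+ (n.-1 - k)
   = b^-1 * \sum_(0 <= k < n.+1) ('C(n + k, k.*2))%:R * (catalan k)%:R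
       * x ^+ (k.*2) * (a * b - x ^+ 2) ^+ (n - k)).
Proof.
move=> hn hb.
have ex : forall k, x ^+ k.*2 = (x ^+ 2) ^+ k by move=> k; rewrite -exprM mul2n.
set RHS1 := \sum_(0 <= k < n) (n%:R)^-1 * ('C(n, k))%:R * ('C(n, k.+1))%:R
       * x ^+ (k.*2) * a ^+ (n - k) * b ^+ (n.-1 - k).
have E1 : b * RHS1 = \sum_(0 <= k < n) (n%:R)^-1 * ('C(n, k))%:R * ('C(n, k.+1))%:R
              * (x ^+ 2) ^+ k * (a * b) ^+ (n - k).
  rewrite /RHS1 mulr_sumr; apply: eq_big_nat => k /andP[_ hk].
  have -> : (n - k = (n.-1 - k).+1)%N by lia.
  by rewrite [a ^+ _.+1]exprS [(a * b) ^+ _.+1]exprS ex !exprMn; ring.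
split.
  apply: (mulfI hb).
  rewrite E1.
  have h1 := @P1 _ n a b x hn.
  have -> : \sum_(0 <= k < n) ('C(n.-1, k))%:R * valleyCat k.+1 a b * x ^+ k
       * (x - a) ^+ (n.-1 - k) * (x - b) ^+ (n.-1 - k)
     = \sum_(0 <= k < n) ('C(n.-1, k))%:R * vc k.+1 a b * x ^+ k
       * (x - a) ^+ (n.-1 - k) * (x - b) ^+ (n.-1 - k) by [].
  rewrite h1; symmetry.
  transitivity (\sum_(0 <= j < n) (n%:R)^-1 * ('C(n, j))%:R * ('C(n, j.+1))%:R
                 * (a * b) ^+ (n - j) * (x ^+ 2) ^+ j).
    by apply: eq_big_nat => j _; ring.
  by rewrite touchard //; ring.
rewrite -[RHS1](mulKf hb) E1 P2 //; congr (_ * _); apply: eq_big_nat => k _.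
by rewrite catF ex.
Qed.
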